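(* Let $\alpha\colon\mathcal H'\to\mathcal H$ be a morphism of graded connected Hopf algebras over a field $\Bbbk$. Let $\varphi,\psi$ be characters of $\mathcal H$ and put $\varphi'=\varphi\circ\alpha$, $\psi'=\psi\circ\alpha$. Then: (a) $\alpha\bigl(S(\varphi',\psi')\bigr)\subseteq S(\varphi,\psi)$; (b) $I(\varphi',\psi')$ is the ideal of $(\mathcal H')^*$ generated by $\alpha^*\bigl(I(\varphi,\psi)\bigr)$. Moreover, if $\alpha$ is injective then $S(\varphi',\psi')=\alpha^{-1}\bigl(S(\varphi,\psi)\bigr)$ and $I(\varphi',\psi')=\alpha^*\bigl(I(\varphi,\psi)\bigr)$.
   Context: Graded connected Hopf algebras have finite-dimensional homogeneous components; $\mathcal H^*=\bigoplus_n(\mathcal H_n)^*$ is the graded dual and $\alpha^*\colon\mathcal H^*\to(\mathcal H')^*$ the dual map. Characters are algebra morphisms to $\Bbbk$; for a linear functional $\varphi$, $\varphi_n=\varphi|_{\mathcal H_n}$. $S(\varphi,\psi)$ is the largest graded subcoalgebra of $\mathcal H$ on which $\varphi=\psi$; $I(\varphi,\psi)$ is the ideal of $\mathcal H^*$ generated by $\varphi_n-\psi_n$, $n\ge0$ (similarly for $\mathcal H'$). *)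

(* Defs.v *)
(* Tensors in H ⊗ H are represented by finite lists of
   pairs (sum of elementary tensors); two such lists represent the same tensor
   iff all functionals f ⊗ g (f, g linear forms) agree on them, which is a
   correct criterion over a field. *)
From HB Require Import structures.
From mathcomp Require Import all_boot all_order all_algebra.
Set Implicit Arguments. Unset Strict Implicit. Unset Printing Implicit Defensive.
Import Order.TTheory GRing.Theory Num.Theory.
Local Open Scope ring_scope.

Section HopfDefs.
Variable k : fieldType.

Definition islinF (V : lmodType k) (f : V -> k) : Prop :=
  forall (a : k) (x y : V), f (a *: x + y) = a * f x + f y.
Definition islinM (V W : lmodType k) (f : V -> W) : Prop :=
  forall (a : k) (x y : V), f (a *: x + y) = a *: f x + f y.

Variable H : algType k.

Definition tev (f g : H -> k) (s : seq (H * H)) : k :=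
  \sum_(p <- s) f p.1 * g p.2.
Definition teq (s t : seq (H * H)) : Prop :=
  forall f g : H -> k, islinF f -> islinF g -> tev f g s = tev f g t.

Record HopfData := {
  hproj : nat -> H -> H;
  hcop : H -> seq (H * H);
  heps : H -> k;
  hanti : H -> H }.

Definition is_gcHopf (D : HopfData) : Prop :=
  let pr := hproj D in let cop := hcop D in
  let eps := heps D in let S := hanti D in
  (* grading: H = ⊕_n H_n with H_n = image of pr n *)
  (forall n, islinM (pr n)) /\
  (forall n m x, pr n (pr m x) = if n == m then pr m x else 0) /\
  (forall x, exists N, x = \sum_(n < N) pr n x) /\
  (forall n, exists s : seq H, forall x, exists c : nat -> k,
       pr n x = \sum_(i < size s) c i *: s`_i) /\
  pr 0%N 1 = 1 /\
  (forall n m x y, pr (n + m)%N (pr n x * pr m y) = pr n x * pr m y) /\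
  (forall x, exists c : k, pr 0%N x = c *: 1) /\ (1 : H) != 0 /\
  (forall a x y, teq (cop (a *: x + y))
                     ([seq (a *: p.1, p.2) | p <- cop x] ++ cop y)) /\
  (forall x (f g h : H -> k), islinF f -> islinF g -> islinF h ->
     \sum_(p <- cop x) tev f g (cop p.1) * h p.2 =
     \sum_(p <- cop x) f p.1 * tev g h (cop p.2)) /\
  (forall x y, teq (cop (x * y))
                   [seq (p.1 * q.1, p.2 * q.2) | p <- cop x, q <- cop y]) /\
  teq (cop 1) [:: (1, 1)] /\
  (forall n x, teq (cop (pr n x))
       [seq (pr i p.1, pr (n - i)%N p.2) | i <- iota 0 n.+1, p <- cop (pr n x)]) /\
  islinF eps /\ eps 1 = 1 /\ (forall x y, eps (x * y) = eps x * eps y) /\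
  (forall x, \sum_(p <- cop x) eps p.1 *: p.2 = x) /\
  (forall x, \sum_(p <- cop x) eps p.2 *: p.1 = x) /\
  (forall n x, (0 < n)%N -> eps (pr n x) = 0) /\
  islinM S /\
  (forall x, \sum_(p <- cop x) S p.1 * p.2 = eps x *: 1) /\
  (forall x, \sum_(p <- cop x) p.1 * S p.2 = eps x *: 1).

Definition is_character (phi : H -> k) : Prop :=
  islinF phi /\ phi 1 = 1 /\ (forall x y, phi (x * y) = phi x * phi y).

Variable D : HopfData.

(* graded dual H^* = ⊕_n (H_n)^* , as linear forms on H vanishing on all
   but finitely many H_n *)
Definition gdual (f : H -> k) : Prop :=
  islinF f /\ exists N, forall n x, (N <= n)%N -> f (hproj D n x) = 0.

Definition conv (f g : H -> k) : H -> k :=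
  fun x => \sum_(p <- hcop D x) f p.1 * g p.2.

Definition ideal_gen (G : (H -> k) -> Prop) (f : H -> k) : Prop :=
  exists (m : nat) (u g v : 'I_m -> H -> k),
    (forall i, gdual (u i) /\ G (g i) /\ gdual (v i)) /\
    forall x, f x = \sum_(i < m) conv (conv (u i) (g i)) (v i) x.

(* phi_n = phi restricted to H_n (extended by 0 to the other components) *)
Definition restr (phi : H -> k) (n : nat) : H -> k :=
  fun x => phi (hproj D n x).

Definition Iset (phi psi : H -> k) : (H -> k) -> Prop :=
  ideal_gen (fun g => exists n, forall x, g x = restr phi n x - restr psi n x).

Definition is_graded_subcoalg (C : H -> Prop) : Prop :=
  C 0 /\ (forall a x y, C x -> C y -> C (a *: x + y)) /\
  (forall n x, C x -> C (hproj D n x)) /\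
  (forall x, C x -> exists s : seq (H * H),
      (forall i, (i < size s)%N ->
         C (nth (0, 0) s i).1 /\ C (nth (0, 0) s i).2) /\ teq (hcop D x) s).

(* S(phi, psi): the largest graded subcoalgebra on which phi = psi, i.e. the
   union of all graded subcoalgebras on which phi = psi *)
Definition Sset (phi psi : H -> k) : H -> Prop :=
  fun x => exists C : H -> Prop, is_graded_subcoalg C /\
     (forall y, C y -> phi y = psi y) /\ C x.

End HopfDefs.

Definition is_hopf_morph (k : fieldType) (H' H : algType k)
    (D' : HopfData H') (D : HopfData H) (alpha : H' -> H) : Prop :=
  islinM alpha /\ alpha 1 = 1 /\ (forall x y, alpha (x * y) = alpha x * alpha y) /\
  (forall n x, alpha (hproj D' n x) = hproj D n (alpha x)) /\
  (forall x, teq (hcop D (alpha x)) [seq (alpha p.1, alpha p.2) | p <- hcop D' x]) /\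
  (forall x, heps D (alpha x) = heps D' x) /\
  (forall x, hanti D (alpha x) = alpha (hanti D' x)).

(* Main.v *)
Require Import Defs.
From HB Require Import structures.
From mathcomp Require Import all_boot all_order all_algebra.
From Stdlib Require Import ClassicalEpsilon FunctionalExtensionality Classical.
From mathcomp Require Import zify.
Set Implicit Arguments. Unset Strict Implicit. Unset Printing Implicit Defensive.
Import Order.TTheory GRing.Theory Num.Theory.
Local Open Scope ring_scope.

Section LinFacts.
Variable k : fieldType.

Lemma linM0 (V W : lmodType k) (f : V -> W) : islinM f -> f 0 = 0.
Proof.
move=> h; have := h 1 0 0; rewrite !scale1r addr0 => /(congr1 (fun z => z - f 0)).
by rewrite subrr addrK => <-.
Qed.
Lemma linMD (V W : lmodType k) (f : V -> W) : islinM f -> forall x y, f (x + y) = f x + f y.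
Proof. by move=> h x y; have := h 1 x y; rewrite !scale1r. Qed.
Lemma linMZ (V W : lmodType k) (f : V -> W) : islinM f -> forall a x, f (a *: x) = a *: f x.
Proof. by move=> h a x; rewrite -[a *: x]addr0 h (linM0 h) addr0. Qed.
Lemma linMN (V W : lmodType k) (f : V -> W) : islinM f -> forall x, f (- x) = - f x.
Proof. by move=> h x; rewrite -scaleN1r linMZ // scaleN1r. Qed.
Lemma linMB (V W : lmodType k) (f : V -> W) : islinM f -> forall x y, f (x - y) = f x - f y.
Proof. by move=> h x y; rewrite linMD // linMN. Qed.
Lemma linM_sum (V W : lmodType k) (f : V -> W) (I : Type) (r : seq I) (P : pred I) (F : I -> V) :
  islinM f -> f (\sum_(i <- r | P i) F i) = \sum_(i <- r | P i) f (F i).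
Proof. move=> h; exact: (big_morph f (linMD h) (linM0 h)). Qed.

Lemma linF0 (V : lmodType k) (f : V -> k) : islinF f -> f 0 = 0.
Proof.
move=> h; have := h 1 0 0; rewrite !scale1r addr0 mul1r => /(congr1 (fun z => z - f 0)).
by rewrite subrr addrK => <-.
Qed.
Lemma linFD (V : lmodType k) (f : V -> k) : islinF f -> forall x y, f (x + y) = f x + f y.
Proof. by move=> h x y; have := h 1 x y; rewrite scale1r mul1r. Qed.
Lemma linFZ (V : lmodType k) (f : V -> k) : islinF f -> forall a x, f (a *: x) = a * f x.
Proof. by move=> h a x; rewrite -[a *: x]addr0 h (linF0 h) addr0. Qed.
Lemma linFN (V : lmodType k) (f : V -> k) : islinF f -> forall x, f (- x) = - f x.
Proof. by move=> h x; rewrite -scaleN1r linFZ // mulN1r. Qed.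
Lemma linFB (V : lmodType k) (f : V -> k) : islinF f -> forall x y, f (x - y) = f x - f y.
Proof. by move=> h x y; rewrite linFD // linFN. Qed.
Lemma linF_sum (V : lmodType k) (f : V -> k) (I : Type) (r : seq I) (P : pred I) (F : I -> V) :
  islinF f -> f (\sum_(i <- r | P i) F i) = \sum_(i <- r | P i) f (F i).
Proof. move=> h; exact: (big_morph f (linFD h) (linF0 h)). Qed.
Lemma linF_comp (V W : lmodType k) (f : W -> k) (g : V -> W) :
  islinF f -> islinM g -> islinF (fun x => f (g x)).
Proof. by move=> hf hg a x y; rewrite hg hf. Qed.
End LinFacts.

Section LinAlg.
Variable k : fieldType.
Variable V : lmodType k.

Definition lc (c : nat -> k) (l : seq V) : V := \sum_(i < size l) c i *: l`_i.
Definition free (l : seq V) := forall c, lc c l = 0 -> forall i, (i < size l)%N -> c i = 0.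
Definition inspan (l : seq V) (y : V) := exists c, y = lc c l.

Lemma lc_lin a c d l : lc (fun i => a * c i + d i) l = a *: lc c l + lc d l.
Proof.
rewrite /lc scaler_sumr -big_split /=; apply: eq_bigr => i _.
by rewrite scalerDl scalerA.
Qed.
Lemma lc_sub c d l : lc (fun i => c i - d i) l = lc c l - lc d l.
Proof. rewrite /lc -sumrB; apply: eq_bigr => i _; by rewrite scalerBl. Qed.
Lemma lc0 l : lc (fun _ => 0) l = 0.
Proof. rewrite /lc big1 // => i _; by rewrite scale0r. Qed.
Lemma lc_ext c d l : (forall i, (i < size l)%N -> c i = d i) -> lc c l = lc d l.
Proof. move=> h; rewrite /lc; apply: eq_bigr => i _; by rewrite h. Qed.
Lemma lc_rcons c l x : lc c (rcons l x) = lc c l + c (size l) *: x.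
Proof.
rewrite /lc size_rcons big_ord_recr /= nth_rcons ltnn eqxx; congr (_ + _).
apply: eq_bigr => i _; by rewrite nth_rcons ltn_ord.
Qed.

Lemma sum_delta (R : zmodType) N n (v : R) :
  \sum_(m < N) (if (m : nat) == n then v else 0) = if (n < N)%N then v else 0.
Proof.
case: ltnP => h.
  rewrite (bigD1 (Ordinal h)) //= eqxx big1 ?addr0 // => i hi.
  rewrite ifF //; apply/negbTE; exact: hi.
rewrite big1 // => i _; rewrite ifF //; apply/negbTE.
by rewrite neq_ltn (leq_trans (ltn_ord i) h).
Qed.

Lemma lc_delta l j : (j < size l)%N -> lc (fun i => (i == j)%:R) l = l`_j.
Proof.
move=> hj; rewrite /lc (eq_bigr (fun i : 'I_(size l) => if (i : nat) == j then l`_j else 0)).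
  by rewrite sum_delta hj.
move=> i _; case: eqP => [->|_]; by rewrite ?scale1r ?scale0r.
Qed.

Lemma inspan0 l : inspan l 0. Proof. exists (fun _ => 0); by rewrite lc0. Qed.
Lemma inspan_lin l a y z : inspan l y -> inspan l z -> inspan l (a *: y + z).
Proof. move=> [c ->] [d ->]; exists (fun i => a * c i + d i); by rewrite lc_lin. Qed.
Lemma inspanD l y z : inspan l y -> inspan l z -> inspan l (y + z).
Proof. move=> hy hz; rewrite -[y]scale1r; exact: inspan_lin. Qed.
Lemma inspanZ l a y : inspan l y -> inspan l (a *: y).
Proof. move=> hy; rewrite -[_ *: _]addr0; apply: inspan_lin hy (inspan0 l). Qed.
Lemma inspan_nth l j : (j < size l)%N -> inspan l l`_j.
Proof. move=> hj; exists (fun i => (i == j)%:R); by rewrite lc_delta. Qed.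
Lemma inspan_mem l y : y \in l -> inspan l y.
Proof. move=> hy; rewrite -(nth_index 0 hy); apply: inspan_nth; by rewrite index_mem. Qed.
Lemma inspan_sum (I : Type) (r : seq I) (F : I -> V) l :
  (forall i, inspan l (F i)) -> inspan l (\sum_(i <- r) F i).
Proof.
move=> h; apply: (big_ind (inspan l)); [exact: inspan0 | exact: inspanD | move=> i _; exact: h].
Qed.
Lemma inspan_sub w L y : (forall x, x \in w -> inspan L x) -> inspan w y -> inspan L y.
Proof.
move=> h [c ->]; rewrite /lc; apply: inspan_sum => i; apply: inspanZ; apply: h; exact: mem_nth.
Qed.
Lemma inspan_cat_l l m y : inspan l y -> inspan (l ++ m) y.
Proof. apply: inspan_sub => x hx; apply: inspan_mem; by rewrite mem_cat hx. Qed.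
Lemma inspan_cat_r l m y : inspan m y -> inspan (l ++ m) y.
Proof. apply: inspan_sub => x hx; apply: inspan_mem; by rewrite mem_cat hx orbT. Qed.

Lemma free_rcons l x : free l -> ~ inspan l x -> free (rcons l x).
Proof.
move=> fl nx c; rewrite lc_rcons => h.
case: (eqVneq (c (size l)) 0) => [cx|cx].
  move: h; rewrite cx scale0r addr0 => h i; rewrite size_rcons ltnS leq_eqVlt.
  case/orP => [/eqP -> //|hi]; exact: fl h i hi.
exfalso; apply: nx.
exists (fun i => (- (c (size l))^-1) * c i + 0); rewrite lc_lin lc0 addr0.
move/eqP: h; rewrite addr_eq0 => /eqP ->.
by rewrite scaleNr scalerN opprK scalerA mulVf // scale1r.
Qed.

Lemma prefix_span b L y : (size b <= size L)%N -> (forall j, (j < size b)%N -> L`_j = b`_j) ->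
  inspan b y -> inspan L y.
Proof.
move=> hs hL; apply: inspan_sub => z hz.
have hi : (index z b < size b)%N by rewrite index_mem.
rewrite -(nth_index 0 hz) -hL //; apply: inspan_nth; exact: leq_trans hi hs.
Qed.

Lemma basis_ext (w b : seq V) : free b -> exists L, [/\ free L, (size b <= size L)%N,
  (forall j, (j < size b)%N -> L`_j = b`_j),
  (forall j, (size b <= j < size L)%N -> L`_j \in w) &
  (forall y, y \in w -> inspan L y)].
Proof.
elim: w b => [|x w IH] b fb.
  exists b; split => //.
  move=> j /andP [h1 h2]; move: (leq_ltn_trans h1 h2); by rewrite ltnn.
case: (classic (inspan b x)) => hx.
  have [L [fL hs hp hm hw]] := IH b fb.
  exists L; split => //.
    move=> j hj; by rewrite in_cons hm ?orbT.
  move=> y; rewrite in_cons => /orP [/eqP ->|hy]; last exact: hw.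
  exact: prefix_span hs hp hx.
have fb' := free_rcons fb hx.
have [L [fL hs hp hm hw]] := IH _ fb'.
have hs' : (size b < size L)%N by move: hs; rewrite size_rcons.
exists L; split => //.
- exact: ltnW.
- move=> j hj; rewrite hp ?size_rcons ?(ltn_trans hj) //; by rewrite nth_rcons hj.
- move=> j /andP [h1 h2]; case: (eqVneq j (size b)) => [ej|nj].
    rewrite hp ej ?size_rcons // nth_rcons ltnn eqxx; exact: mem_head.
  rewrite in_cons hm ?orbT //; rewrite size_rcons h2 andbT ltn_neqAle h1 andbT eq_sym; exact: nj.
- move=> y; rewrite in_cons => /orP [/eqP ->|hy]; last exact: hw.
  apply: prefix_span hs hp _; apply: inspan_mem; by rewrite mem_rcons mem_head.
Qed.

Definition coord (L : seq V) (i : nat) (y : V) : k :=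
  epsilon (inhabits (fun _ : nat => 0 : k)) (fun c => y = lc c L) i.

Lemma coord_spec L y : inspan L y -> y = lc (fun i => coord L i y) L.
Proof. move=> h; rewrite /coord; exact: (epsilon_spec _ (fun c => y = lc c L) h). Qed.

Lemma free_uniq L c d : free L -> lc c L = lc d L -> forall i, (i < size L)%N -> c i = d i.
Proof.
move=> fL h i hi; apply/eqP; rewrite -subr_eq0; apply/eqP.
apply: (fL (fun i => c i - d i)) => //; by rewrite lc_sub h subrr.
Qed.

Lemma coord_uniq L y c : free L -> y = lc c L -> forall i, (i < size L)%N -> coord L i y = c i.
Proof.
move=> fL hy; apply: (free_uniq fL); rewrite -hy; symmetry; apply: coord_spec; by exists c.
Qed.

Lemma coord_lin L a y z i : free L -> inspan L y -> inspan L z -> (i < size L)%N ->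
  coord L i (a *: y + z) = a * coord L i y + coord L i z.
Proof.
move=> fL hy hz hi.
apply: (coord_uniq (c := fun i => a * coord L i y + coord L i z)) fL _ i hi.
by rewrite lc_lin -!coord_spec.
Qed.

Lemma coord0 L i : free L -> (i < size L)%N -> coord L i 0 = 0.
Proof. move=> fL hi; apply: (coord_uniq (c := fun _ => 0)) => //; by rewrite lc0. Qed.

Lemma ext_fun (P : V -> V) (w b : seq V) (t : nat -> k) :
  islinM P -> (forall x, inspan w (P x)) -> free b ->
  (forall j, (j < size b)%N -> P b`_j = b`_j) ->
  exists g : V -> k, [/\ islinF g, (forall j, (j < size b)%N -> g b`_j = t j) &
     (forall x, P x = 0 -> g x = 0)].
Proof.
move=> hP hw fb hb.
have [L [fL hs hp _ hwL]] := basis_ext w fb.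
have hPL x : inspan L (P x) by apply: inspan_sub hwL (hw x).
exists (fun x => \sum_(i < size b) t i * coord L i (P x)); split.
- move=> a x y; rewrite mulr_sumr -big_split /=; apply: eq_bigr => i _.
  rewrite hP coord_lin // ?(leq_trans (ltn_ord i) hs) //; by rewrite mulrDr mulrCA.
- move=> j hj; rewrite hb //.
  rewrite (eq_bigr (fun i : 'I_(size b) => if (i : nat) == j then t j else 0)) ?sum_delta ?hj //.
  move=> i _; rewrite -hp // (coord_uniq (c := fun i => (i == j)%:R)) //;
    last by rewrite (leq_trans (ltn_ord i) hs).
    case: eqP => [->|_]; by rewrite ?mulr1 ?mulr0.
  by rewrite lc_delta // (leq_trans hj hs).
- move=> x ->; rewrite big1 // => i _; by rewrite coord0 ?mulr0 // (leq_trans (ltn_ord i) hs).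
Qed.

End LinAlg.

Section Graded.
Variables (k : fieldType) (H : algType k) (D : HopfData H).
Hypothesis hD : is_gcHopf D.

Let hD' := hD.
Lemma hDs : let pr := hproj D in let cop := hcop D in
  let eps := heps D in
  (forall n, islinM (pr n)) /\
  (forall n m x, pr n (pr m x) = if n == m then pr m x else 0) /\
  (forall x, exists N, x = \sum_(n < N) pr n x) /\
  (forall n, exists s : seq H, forall x, exists c : nat -> k,
       pr n x = \sum_(i < size s) c i *: s`_i) /\
  (forall a x y, teq (cop (a *: x + y))
                     ([seq (a *: p.1, p.2) | p <- cop x] ++ cop y)) /\
  (forall x (f g h : H -> k), islinF f -> islinF g -> islinF h ->
     \sum_(p <- cop x) tev f g (cop p.1) * h p.2 =
     \sum_(p <- cop x) f p.1 * tev g h (cop p.2)) /\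
  (forall n x, teq (cop (pr n x))
       [seq (pr i p.1, pr (n - i)%N p.2) | i <- iota 0 n.+1, p <- cop (pr n x)]) /\
  islinF eps /\
  (forall x, \sum_(p <- cop x) eps p.1 *: p.2 = x) /\
  (forall x, \sum_(p <- cop x) eps p.2 *: p.1 = x) /\
  (forall n x, (0 < n)%N -> eps (pr n x) = 0).
Proof.
move: hD; rewrite /is_gcHopf /=.
move=> [h1 [h2 [h3 [h4 [h5 [h6 [h7 [h8 [h9 [h10 [h11 [h12 [h13 [h14 [h15 [h16 [h17 [h18 [h19 _]]]]]]]]]]]]]]]]]]].
exact: (conj h1 (conj h2 (conj h3 (conj h4 (conj h9 (conj h10 (conj h13 (conj h14 (conj h17 (conj h18 h19)))))))))).
Qed.

Lemma pr_lin n : islinM (hproj D n). Proof. by case: hDs => hh _; apply: hh. Qed.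
Lemma pr_pr n m x : hproj D n (hproj D m x) = if n == m then hproj D m x else 0.
Proof. by case: hDs => _ [] hh _; exact: hh. Qed.
Lemma pr_fin x : exists N, x = \sum_(n < N) hproj D n x.
Proof. by case: hDs => _ [] _ [] hh _; exact: hh. Qed.
Lemma pr_span n : exists s : seq H, forall x, exists c : nat -> k,
       hproj D n x = \sum_(i < size s) c i *: s`_i.
Proof. by case: hDs => _ [] _ [] _ [] hh _; exact: hh. Qed.
Lemma cop_lin a x y : teq (hcop D (a *: x + y))
                     ([seq (a *: p.1, p.2) | p <- hcop D x] ++ hcop D y).
Proof. by case: hDs => _ [] _ [] _ [] _ [] hh _; exact: hh. Qed.
Lemma coassoc x (f g h : H -> k) : islinF f -> islinF g -> islinF h ->
     \sum_(p <- hcop D x) tev f g (hcop D p.1) * h p.2 =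
     \sum_(p <- hcop D x) f p.1 * tev g h (hcop D p.2).
Proof. by case: hDs => _ [] _ [] _ [] _ [] _ [] hh _; exact: hh. Qed.
Lemma cop_grad n x : teq (hcop D (hproj D n x))
       [seq (hproj D i p.1, hproj D (n - i)%N p.2) | i <- iota 0 n.+1, p <- hcop D (hproj D n x)].
Proof. by case: hDs => _ [] _ [] _ [] _ [] _ [] _ [] hh _; exact: hh. Qed.
Lemma eps_lin : islinF (heps D).
Proof. by case: hDs => _ [] _ [] _ [] _ [] _ [] _ [] _ [] hh _; exact: hh. Qed.
Lemma eps_l x : \sum_(p <- hcop D x) heps D p.1 *: p.2 = x.
Proof. by case: hDs => _ [] _ [] _ [] _ [] _ [] _ [] _ [] _ [] hh _; exact: hh. Qed.
Lemma eps_r x : \sum_(p <- hcop D x) heps D p.2 *: p.1 = x.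
Proof. by case: hDs => _ [] _ [] _ [] _ [] _ [] _ [] _ [] _ [] _ [] hh _; exact: hh. Qed.
Lemma eps_pr n x : (0 < n)%N -> heps D (hproj D n x) = 0.
Proof. by case: hDs => _ [] _ [] _ [] _ [] _ [] _ [] _ [] _ [] _ [] _ hh; exact: hh. Qed.

Definition Pn N x := \sum_(n < N) hproj D n x.

Lemma Pn_lin N : islinM (Pn N).
Proof.
move=> a x y; rewrite /Pn scaler_sumr -big_split /=; apply: eq_bigr => i _.
exact: pr_lin.
Qed.

Lemma pr_Pn m N y : hproj D m (Pn N y) = if (m < N)%N then hproj D m y else 0.
Proof.
rewrite /Pn (linM_sum _ _ _ (pr_lin m)).
rewrite (eq_bigr (fun n : 'I_N => if (n : nat) == m then hproj D m y else 0)) ?sum_delta //.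
move=> n _; rewrite pr_pr; by case: (eqVneq (n:nat) m) => [->|].
Qed.

Lemma Pn_pr N n x : Pn N (hproj D n x) = if (n < N)%N then hproj D n x else 0.
Proof.
rewrite /Pn (eq_bigr (fun m : 'I_N => if (m : nat) == n then hproj D n x else 0)) ?sum_delta //.
move=> m _; by rewrite pr_pr.
Qed.

Lemma Pn_idem N x : Pn N (Pn N x) = Pn N x.
Proof.
rewrite {2 3}/Pn (linM_sum _ _ _ (Pn_lin N)); apply: eq_bigr => i _; by rewrite Pn_pr ltn_ord.
Qed.

Lemma Pn_eventually x : exists N0, forall M, (N0 <= M)%N -> Pn M x = x.
Proof.
have [N0 hx] := pr_fin x; exists N0 => M hM.
rewrite hx (linM_sum _ _ _ (Pn_lin M)); apply: eq_bigr => i _.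
by rewrite Pn_pr (leq_trans (ltn_ord i) hM).
Qed.

Lemma Pn_fix_list (b : seq H) : exists N, forall y, y \in b -> Pn N y = y.
Proof.
suff [N hN] : exists N, forall M, (N <= M)%N -> forall y, y \in b -> Pn M y = y.
  by exists N; apply: hN.
elim: b => [|x b [N1 h1]]; first by exists 0%N.
have [N0 h0] := Pn_eventually x.
exists (maxn N0 N1) => M hM y; rewrite in_cons => /orP [/eqP ->|hy].
  apply: h0; exact: leq_trans (leq_maxl _ _) hM.
apply: h1 => //; exact: leq_trans (leq_maxr _ _) hM.
Qed.

Lemma Pn_S N x : Pn N.+1 x = Pn N x + hproj D N x.
Proof. by rewrite /Pn big_ord_recr. Qed.

Lemma Pn_span N : exists w : seq H, (forall x, inspan w (Pn N x)) /\
   (forall y, y \in w -> Pn N y = y).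
Proof.
elim: N => [|N [w [hw1 hw2]]].
  exists [::]; split => // x; rewrite /Pn big_ord0; exact: inspan0.
have [s hs] := pr_span N.
exists (w ++ map (hproj D N) s); split.
  move=> x; rewrite Pn_S; apply: inspanD; first exact: inspan_cat_l.
  apply: inspan_cat_r; have [c hc] := hs x; exists c.
  rewrite -{1}[hproj D N x](_ : hproj D N (hproj D N x) = _); last by rewrite pr_pr eqxx.
  rewrite hc (linM_sum _ _ _ (pr_lin N)) /lc size_map; apply: eq_bigr => i _.
  by rewrite (linMZ (pr_lin N)) (nth_map 0).
move=> y; rewrite mem_cat => /orP [hy|/mapP [z _ ->]].
  by rewrite Pn_S hw2 // -{2}(hw2 _ hy) pr_Pn ltnn addr0.
by rewrite Pn_S Pn_pr ltnn /= add0r pr_pr eqxx.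
Qed.

Lemma dual_graded (b : seq H) (t : nat -> k) : free b ->
  exists g : H -> k, [/\ islinF g, (forall j, (j < size b)%N -> g b`_j = t j) &
     (exists N, forall n x, (N <= n)%N -> g (hproj D n x) = 0)].
Proof.
move=> fb; have [N hN] := Pn_fix_list b.
have [w [hw1 _]] := Pn_span N.
have [g [g1 g2 g3]] := ext_fun t (Pn_lin N) hw1 fb (fun j hj => hN _ (mem_nth 0 hj)).
exists g; split => //; exists N => n x hn; apply: g3; by rewrite Pn_pr ltnNge hn.
Qed.

Lemma separation (z : H) : (forall g : H -> k, islinF g -> g z = 0) -> z = 0.
Proof.
move=> h; apply: NNPP => nz.
have fz : free [:: z].
  move=> c; rewrite /lc /= big_ord_recr big_ord0 /= add0r => /eqP.
  rewrite scaler_eq0 => /orP [/eqP c0|/eqP //] i; by rewrite ltnS leqn0 => /eqP ->.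
have [g [g1 g2 _]] := dual_graded (fun _ => 1) fz.
have := g2 0%N isT; rewrite /= h //; move/eqP; by rewrite eq_sym oner_eq0.
Qed.

End Graded.

Fixpoint allP (T : Type) (P : T -> Prop) (l : seq T) : Prop :=
  if l is t :: l' then P t /\ allP P l' else True.

Lemma allP_map (T U : Type) (P : U -> Prop) (h : T -> U) r :
  (forall x, P (h x)) -> allP P (map h r).
Proof. move=> hP; elim: r => //= x r IH; by split. Qed.
Lemma allP_map2 (T U : Type) (P : T -> Prop) (Q : U -> Prop) (h : T -> U) r :
  (forall x, P x -> Q (h x)) -> allP P r -> allP Q (map h r).
Proof. move=> hP; elim: r => //= x r IH [h1 h2]; split; [exact: hP | exact: IH]. Qed.
Lemma allP_nth (T : Type) (P : T -> Prop) (l : seq T) d i :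
  allP P l -> (i < size l)%N -> P (nth d l i).
Proof.
elim: l i => [|t l IH] i /=; first by move=> _; rewrite ltn0.
case: i => [|i] [h1 h2] hi //=; exact: IH.
Qed.
Lemma allP_cat (T : Type) (P : T -> Prop) (l1 l2 : seq T) :
  allP P l1 -> allP P l2 -> allP P (l1 ++ l2).
Proof. elim: l1 => //= t l IH [h1 h2] h; split => //; exact: IH. Qed.
Lemma sum_allP (T : Type) (R : zmodType) (P : T -> Prop) (l : seq T) (F G : T -> R) :
  allP P l -> (forall t, P t -> F t = G t) -> \sum_(t <- l) F t = \sum_(t <- l) G t.
Proof.
move=> hl hFG; elim: l hl => [|t l IH] /=; first by rewrite !big_nil.
move=> [h1 h2]; by rewrite !big_cons hFG // IH.
Qed.

Section Tens.
Variables (k : fieldType) (A : algType k).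

Lemma tev_cat (f g : A -> k) s t : tev f g (s ++ t) = tev f g s + tev f g t.
Proof. by rewrite /tev big_cat. Qed.

Lemma tev_scale (f g : A -> k) a s : islinF f ->
  tev f g [seq (a *: p.1, p.2) | p <- s] = a * tev f g s.
Proof.
move=> hf; rewrite /tev big_map mulr_sumr; apply: eq_bigr => p _ /=.
by rewrite (linFZ hf) mulrA.
Qed.

Lemma tev_swap (f g : A -> k) s : tev f g [seq (p.2, p.1) | p <- s] = tev g f s.
Proof. rewrite /tev big_map; apply: eq_bigr => p _ /=; by rewrite mulrC. Qed.

Lemma reduce_fst (r : seq (A * A)) : exists r' : seq (A * A),
  [/\ (forall f g : A -> k, islinF f -> islinF g -> tev f g r' = tev f g r),
      free (map fst r') &
      (forall i, (i < size r')%N -> (nth (0,0) r' i).1 \in map fst r)].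
Proof.
have f0 : free (Nil A) by move=> c _ i.
have [L [fL _ _ hm hw]] := basis_ext (map fst r) f0.
exists (mkseq (fun i => (L`_i, \sum_(p <- r) coord L i p.1 *: p.2)) (size L)); split.
- move=> f g hf hg; have e : iota 0 (size L) = index_iota 0 (size L) by rewrite /index_iota subn0.
  rewrite /tev /mkseq big_map e big_mkord /=.
  under eq_bigr do rewrite (linF_sum _ _ _ hg) mulr_sumr.
  rewrite exchange_big /=; apply: eq_big_seq => p hp.
  transitivity (f (lc (fun i => coord L i p.1) L) * g p.2); last first.
    by rewrite -coord_spec //; apply: hw; exact: map_f.
  rewrite /lc (linF_sum _ _ _ hf) mulr_suml; apply: eq_bigr => i _.
  by rewrite (linFZ hf) (linFZ hg) mulrA (mulrC (f _)).
- have -> : map fst (mkseq (fun i => (L`_i, \sum_(p <- r) coord L i p.1 *: p.2)) (size L)) = L.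
    rewrite /mkseq -map_comp; exact: (mkseq_nth 0 L).
  exact: fL.
- move=> i; rewrite size_mkseq => hi; rewrite nth_mkseq //=; apply: hm; by rewrite /= hi.
Qed.

Lemma reduce_snd (r : seq (A * A)) : exists r' : seq (A * A),
  [/\ (forall f g : A -> k, islinF f -> islinF g -> tev f g r' = tev f g r),
      free (map snd r') &
      (forall i, (i < size r')%N -> (nth (0,0) r' i).2 \in map snd r)].
Proof.
have [r' [h1 h2 h3]] := reduce_fst [seq (p.2, p.1) | p <- r].
exists [seq (p.2, p.1) | p <- r']; split.
- move=> f g hf hg; by rewrite tev_swap h1 // tev_swap.
- by rewrite -map_comp.
- move=> i; rewrite size_map => hi; rewrite (nth_map (0,0)) //=.
  have := h3 i hi; by rewrite -map_comp.
Qed.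
End Tens.

Section Conv.
Variables (k : fieldType) (H : algType k) (D : HopfData H).
Hypothesis hD : is_gcHopf D.

Lemma convE f g x : conv D f g x = tev f g (hcop D x). Proof. by []. Qed.

Lemma conv_lin f g : islinF f -> islinF g -> islinF (conv D f g).
Proof.
move=> hf hg a x y; rewrite !convE (cop_lin hD a x y hf hg) tev_cat tev_scale //.
Qed.

Lemma conv_assoc f g h : islinF f -> islinF g -> islinF h ->
  conv D (conv D f g) h = conv D f (conv D g h).
Proof. move=> hf hg hh; apply: functional_extensionality => x; exact: (coassoc hD x hf hg hh). Qed.

Lemma conv_gdual f g : gdual D f -> gdual D g -> gdual D (conv D f g).
Proof.
move=> [hf [Nf hNf]] [hg [Ng hNg]]; split; first exact: conv_lin.
exists (Nf + Ng)%N => n x hn.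
rewrite convE (cop_grad hD n x hf hg) /tev.
rewrite big1_seq // => q /andP [_ /allpairsP [[i p] [hi hp ->]]] /=.
case: (leqP Nf i) => hi'; first by rewrite hNf // mul0r.
rewrite hNg ?mulr0 //; lia.
Qed.

Lemma conv_eps_l h : islinF h -> conv D (heps D) h = h.
Proof.
move=> hh; apply: functional_extensionality => x; rewrite convE /tev.
rewrite -{2}(eps_l hD x) (linF_sum _ _ _ hh); apply: eq_bigr => p _; by rewrite (linFZ hh).
Qed.

Lemma conv_eps_r h : islinF h -> conv D h (heps D) = h.
Proof.
move=> hh; apply: functional_extensionality => x; rewrite convE /tev.
rewrite -{2}(eps_r hD x) (linF_sum _ _ _ hh); apply: eq_bigr => p _; by rewrite (linFZ hh) mulrC.
Qed.

Lemma eps_gdual : gdual D (heps D).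
Proof. split; first exact: eps_lin hD. exists 1%N => n x hn; exact: eps_pr. Qed.

Lemma conv_sumr (I : Type) (r : seq I) f (F : I -> H -> k) :
  conv D f (fun x => \sum_(i <- r) F i x) = fun x => \sum_(i <- r) conv D f (F i) x.
Proof.
apply: functional_extensionality => x; rewrite /conv.
under eq_bigr do rewrite mulr_sumr. by rewrite exchange_big.
Qed.

Lemma conv_suml (I : Type) (r : seq I) g (F : I -> H -> k) :
  conv D (fun x => \sum_(i <- r) F i x) g = fun x => \sum_(i <- r) conv D (F i) g x.
Proof.
apply: functional_extensionality => x; rewrite /conv.
under eq_bigr do rewrite mulr_suml. by rewrite exchange_big.
Qed.

Definition tri (t : (H -> k) * (H -> k) * (H -> k)) := conv D (conv D t.1.1 t.1.2) t.2.
Definition goodt (G : (H -> k) -> Prop) (t : (H -> k) * (H -> k) * (H -> k)) :=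
  gdual D t.1.1 /\ G t.1.2 /\ gdual D t.2.

Lemma ideal_list G f : ideal_gen D G f <->
  exists l, allP (goodt G) l /\ forall x, f x = \sum_(t <- l) tri t x.
Proof.
split.
  move=> [m [u [g [v [hg hf]]]]].
  exists [seq (u i, g i, v i) | i <- index_enum 'I_m]; split.
    apply: allP_map => i; exact: hg i.
  move=> x; rewrite hf big_map; by [].
move=> [l [hl hf]].
pose d := (fun _ : H => 0 : k, fun _ : H => 0 : k, fun _ : H => 0 : k).
exists (size l), (fun i => (nth d l i).1.1), (fun i => (nth d l i).1.2), (fun i => (nth d l i).2); split.
  move=> i; exact: (allP_nth d hl (ltn_ord i)).
move=> x; by rewrite hf (big_nth d) big_mkord.
Qed.

Lemma ideal_ext G f f' : ideal_gen D G f -> (forall x, f x = f' x) -> ideal_gen D G f'.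
Proof.
move=> [m [u [g [v [h1 h2]]]]] e; exists m, u, g, v; split => // x; by rewrite -e.
Qed.

Lemma ideal0 G : ideal_gen D G (fun _ => 0).
Proof. apply/ideal_list; exists [::]; split => // x; by rewrite big_nil. Qed.

Lemma idealD G f1 f2 : ideal_gen D G f1 -> ideal_gen D G f2 ->
  ideal_gen D G (fun x => f1 x + f2 x).
Proof.
move=> /ideal_list [l1 [h1 e1]] /ideal_list [l2 [h2 e2]]; apply/ideal_list.
exists (l1 ++ l2); split; first exact: allP_cat.
move=> x; by rewrite big_cat e1 e2.
Qed.

Lemma ideal_sum G (I : Type) (r : seq I) (F : I -> H -> k) :
  (forall i, ideal_gen D G (F i)) -> ideal_gen D G (fun x => \sum_(i <- r) F i x).
Proof.
move=> h; elim: r => [|i r IH].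
  apply: ideal_ext (ideal0 G) _ => x; by rewrite big_nil.
apply: ideal_ext (idealD (h i) IH) _ => x; by rewrite big_cons.
Qed.

Lemma ideal_mul G u v f : (forall g, G g -> islinF g) -> gdual D u -> gdual D v ->
  ideal_gen D G f -> ideal_gen D G (conv D (conv D u f) v).
Proof.
move=> hG hu hv /ideal_list [l [hl hf]].
have -> : f = fun x => \sum_(t <- l) tri t x by apply: functional_extensionality.
apply/ideal_list; exists [seq (conv D u t.1.1, t.1.2, conv D t.2 v) | t <- l]; split.
  move: hl; apply: allP_map2 => t [h1 [h2 h3]]; split; first exact: conv_gdual.
  split => //; exact: conv_gdual.
move=> x; rewrite conv_sumr conv_suml big_map; apply: (sum_allP hl) => t [[la _] [le [lb _]]].
have lu := hu.1; have lv := hv.1; have le' := hG _ le.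
rewrite /tri /=.
rewrite -(conv_assoc lu (conv_lin la le') lb) -(conv_assoc lu la le').
by rewrite (conv_assoc (conv_lin (conv_lin lu la) le') lb lv).
Qed.

Lemma C_sum (C : H -> Prop) (I : Type) (r : seq I) (F : I -> H) :
  is_graded_subcoalg D C -> (forall i, C (F i)) -> C (\sum_(i <- r) F i).
Proof.
move=> [c0 [cl _]] h; apply: (big_ind C) => //.
move=> a b ha hb; rewrite -[a]scale1r; exact: cl.
Qed.

Lemma C_scale (C : H -> Prop) a x : is_graded_subcoalg D C -> C x -> C (a *: x).
Proof. move=> [c0 [cl _]] hx; rewrite -[_ *: _]addr0; exact: cl. Qed.

Lemma key (C : H -> Prop) (q s : seq (H * H)) : is_graded_subcoalg D C ->
  (forall i, (i < size s)%N -> C (nth (0,0) s i).1 /\ C (nth (0,0) s i).2) ->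
  (forall f g, islinF f -> islinF g -> tev f g q = tev f g s) ->
  free (map fst q) -> forall i, (i < size q)%N -> C (nth (0,0) q i).2.
Proof.
move=> hC hs hqs fq i hi.
have [f [hf1 hf2 _]] := dual_graded hD (fun j => (j == i)%:R) fq.
set y := \sum_(j < size s) f (nth (0,0) s j).1 *: (nth (0,0) s j).2.
have Cy : C y.
  apply: C_sum => // j; apply: C_scale => //; exact: (hs j (ltn_ord j)).2.
suff -> : (nth (0,0) q i).2 = y by [].
apply/eqP; rewrite -subr_eq0; apply/eqP; apply: (separation hD) => g hg.
rewrite (linFB hg); apply/eqP; rewrite subr_eq0; apply/eqP.
have := hqs f g hf1 hg; rewrite /tev (big_nth (0,0)) big_mkord.
rewrite (eq_bigr (fun j : 'I_(size q) => if (j:nat) == i then g (nth (0,0) q i).2 else 0)).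
  rewrite sum_delta hi => ->; rewrite (big_nth (0,0)) big_mkord (linF_sum _ _ _ hg).
  apply: eq_bigr => j _; by rewrite (linFZ hg).
move=> j _; rewrite -(nth_map (0,0) 0) // hf2 ?size_map //.
case: eqP => [->|_]; by rewrite ?mul1r ?mul0r.
Qed.

Lemma key_sym (C : H -> Prop) (q s : seq (H * H)) : is_graded_subcoalg D C ->
  (forall i, (i < size s)%N -> C (nth (0,0) s i).1 /\ C (nth (0,0) s i).2) ->
  (forall f g, islinF f -> islinF g -> tev f g q = tev f g s) ->
  free (map snd q) -> forall i, (i < size q)%N -> C (nth (0,0) q i).1.
Proof.
move=> hC hs hqs fq i hi.
have hs' : forall j, (j < size [seq (p.2,p.1) | p <- s])%N ->
   C (nth (0,0) [seq (p.2,p.1) | p <- s] j).1 /\ C (nth (0,0) [seq (p.2,p.1) | p <- s] j).2.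
  move=> j; rewrite size_map => hj; rewrite (nth_map (0,0)) //=; have [a b] := hs j hj; by split.
have hqs' : forall f g, islinF f -> islinF g ->
   tev f g [seq (p.2,p.1) | p <- q] = tev f g [seq (p.2,p.1) | p <- s].
  move=> f g hf hg; rewrite !tev_swap; exact: hqs.
have fq' : free (map fst [seq (p.2,p.1) | p <- q]) by rewrite -map_comp.
have := key hC hs' hqs' fq' (i:=i); rewrite size_map (nth_map (0,0)) //=; by apply.
Qed.

End Conv.

Lemma fchoice (I T : Type) (P : I -> T -> Prop) :
  (forall i, exists t, P i t) -> exists F : I -> T, forall i, P i (F i).
Proof.
move=> h; exists (fun i => proj1_sig (constructive_indefinite_description _ (h i))) => i.
exact: proj2_sig.
Qed.

Section GenLemmas.
Variables (k : fieldType) (A : algType k) (E : HopfData A).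
Hypothesis hE : is_gcHopf E.

Lemma Gen_lin (phi psi g : A -> k) : islinF phi -> islinF psi ->
  (exists n, forall x, g x = restr E phi n x - restr E psi n x) -> islinF g.
Proof.
move=> hp hq [n hn] a x y; rewrite !hn /restr (pr_lin hE n) hp hq.
by rewrite mulrBr opprD addrACA.
Qed.

Lemma gen_ideal (phi psi : A -> k) n : islinF phi -> islinF psi ->
  Iset E phi psi (fun y => restr E phi n y - restr E psi n y).
Proof.
move=> hp hq.
have lg : islinF (fun y => restr E phi n y - restr E psi n y).
  apply: Gen_lin hp hq _; by exists n.
exists 1%N, (fun _ => heps E), (fun _ y => restr E phi n y - restr E psi n y), (fun _ => heps E).
split.
  move=> i; split; first exact: eps_gdual.
  split; last exact: eps_gdual. by exists n.
move=> x; by rewrite big_ord1 (conv_eps_l hE lg) (conv_eps_r hE lg).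
Qed.

Lemma u_stable (u : A -> k) N x : islinF u ->
  (forall n y, (N <= n)%N -> u (hproj E n y) = 0) ->
  forall M, (N <= M)%N -> u (Pn E M x) = u (Pn E N x).
Proof.
move=> hu hN; elim=> [|M IH].
  by rewrite leqn0 => /eqP ->.
rewrite leq_eqVlt => /orP [/eqP -> //|hM].
by rewrite Pn_S (linFD hu) hN // addr0 IH.
Qed.
End GenLemmas.

Section Morph.
Variables (k : fieldType) (H' H : algType k) (D' : HopfData H') (D : HopfData H)
  (alpha : H' -> H).
Hypotheses (hD' : is_gcHopf D') (hD : is_gcHopf D) (ha : is_hopf_morph D' D alpha).

Lemma a_lin : islinM alpha.
Proof. by case: ha => h _; exact: h. Qed.
Lemma a_pr n x : alpha (hproj D' n x) = hproj D n (alpha x).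
Proof. by case: ha => _ [_ [_ [h _]]]; exact: h. Qed.
Lemma a_cop x : teq (hcop D (alpha x)) [seq (alpha p.1, alpha p.2) | p <- hcop D' x].
Proof. by case: ha => _ [_ [_ [_ [h _]]]]; exact: h. Qed.

Lemma a_Pn N x : alpha (Pn D' N x) = Pn D N (alpha x).
Proof. rewrite /Pn (linM_sum _ _ _ a_lin); apply: eq_bigr => i _; exact: a_pr. Qed.

Lemma tev_map (f g : H -> k) s : tev f g [seq (alpha p.1, alpha p.2) | p <- s] =
  tev (fun x => f (alpha x)) (fun x => g (alpha x)) s.
Proof. by rewrite /tev big_map. Qed.

Lemma conv_alpha f g x : islinF f -> islinF g ->
  conv D f g (alpha x) = conv D' (fun y => f (alpha y)) (fun y => g (alpha y)) x.
Proof. move=> hf hg; by rewrite convE (a_cop x hf hg) tev_map. Qed.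

Lemma gdual_comp f : gdual D f -> gdual D' (fun x => f (alpha x)).
Proof.
move=> [hf [N hN]]; split; first exact: linF_comp hf a_lin.
exists N => n x hn; by rewrite a_pr hN.
Qed.

Lemma free_map (l : seq H') : injective alpha -> free l -> free (map alpha l).
Proof.
move=> inj fl c hc; rewrite size_map; apply: fl; apply: inj.
transitivity (lc c (map alpha l)); last by rewrite hc (linM0 a_lin).
rewrite /lc size_map (linM_sum _ _ _ a_lin); apply: eq_bigr => i _.
by rewrite (linMZ a_lin) (nth_map 0).
Qed.

Lemma pull (phi psi h : H -> k) : islinF phi -> islinF psi -> Iset D phi psi h ->
  Iset D' (fun x => phi (alpha x)) (fun x => psi (alpha x)) (fun x => h (alpha x)).
Proof.
move=> hp hq [m [u [g [v [hg hh]]]]].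
exists m, (fun i x => u i (alpha x)), (fun i x => g i (alpha x)), (fun i x => v i (alpha x)); split.
  move=> i; have [hu [[n hn] hv]] := hg i; split; first exact: gdual_comp.
  split; last exact: gdual_comp.
  exists n => x; by rewrite hn /restr a_pr.
move=> x; rewrite hh; apply: eq_bigr => i _.
have [[lu _] [gi [lv _]]] := hg i.
have lg := Gen_lin hD hp hq gi.
rewrite (conv_alpha _ (conv_lin hD lu lg) lv).
congr (conv D' _ _ x); apply: functional_extensionality => y; exact: conv_alpha.
Qed.

Lemma lift u : injective alpha -> gdual D' u ->
  exists U, gdual D U /\ forall x, U (alpha x) = u x.
Proof.
move=> inj [hu [N hN]].
have [w' [hw1 hw2]] := Pn_span hD' N.
have f0 : free (Nil H') by move=> c _ i.
have [L [fL _ _ hm hw]] := basis_ext w' f0.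
have fb : free (map alpha L) := free_map inj fL.
have [w [hwH _]] := Pn_span hD N.
have hb : forall j, (j < size (map alpha L))%N -> Pn D N (map alpha L)`_j = (map alpha L)`_j.
  move=> j; rewrite size_map => hj; rewrite (nth_map 0) // -a_Pn hw2 //; apply: hm; by rewrite /= hj.
have [g [g1 g2 g3]] := ext_fun (fun j => u L`_j) (Pn_lin hD N) hwH fb hb.
exists g; split.
  split => //; exists N => n x hn; apply: g3; by rewrite (Pn_pr hD) ltnNge hn.
move=> x.
have ex : x = Pn D' N x + (x - Pn D' N x) by rewrite addrC subrK.
have hz : Pn D N (alpha (x - Pn D' N x)) = 0.
  by rewrite -a_Pn (linMB (Pn_lin hD' N)) (Pn_idem hD') subrr (linM0 a_lin).
have uz : u (x - Pn D' N x) = 0.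
  have [M0 hM0] := Pn_eventually hD' x.
  rewrite (linFB hu) -{1}(hM0 (maxn M0 N) (leq_maxl _ _)).
  by rewrite (u_stable x hu hN (leq_maxr M0 N)) subrr.
transitivity (g (alpha (Pn D' N x))).
  by rewrite {1}ex (linMD a_lin) (linFD g1) (g3 _ hz) addr0.
transitivity (u (Pn D' N x)); last by rewrite {2}ex (linFD hu) uz addr0.
have [c ->] := inspan_sub hw (hw1 x).
rewrite /lc (linM_sum _ _ _ a_lin) (linF_sum _ _ _ g1) (linF_sum _ _ _ hu); apply: eq_bigr => i _.
rewrite (linMZ a_lin) (linFZ g1) (linFZ hu) -(nth_map 0 0) // g2 // size_map //.
Qed.

Section Chars.
Variables (phi psi : H -> k).

Lemma S_image x : Sset D' (fun x => phi (alpha x)) (fun x => psi (alpha x)) x ->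
  Sset D phi psi (alpha x).
Proof.
move=> [C' [[c0 [cl [cp cc]]] [heq hx]]].
exists (fun y => exists x', C' x' /\ y = alpha x'); split; last first.
  split; [move=> y [x' [hx' ->]]; exact: heq | by exists x].
split; first by exists 0; split => //; rewrite (linM0 a_lin).
split.
  move=> a y z [y' [hy ->]] [z' [hz ->]]; exists (a *: y' + z'); split; [exact: cl | by rewrite a_lin].
split.
  move=> n y [y' [hy ->]]; exists (hproj D' n y'); split; [exact: cp | by rewrite a_pr].
move=> y [y' [hy ->]]; have [s' [hs1 hs2]] := cc y' hy.
exists [seq (alpha p.1, alpha p.2) | p <- s']; split.
  move=> i; rewrite size_map => hi; rewrite (nth_map (0,0)) //=.
  have [h1 h2] := hs1 i hi; split; [by exists (nth (0,0) s' i).1 | by exists (nth (0,0) s' i).2].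
move=> f g hf hg; rewrite (a_cop y' hf hg) !tev_map; apply: hs2; exact: linF_comp a_lin.
Qed.

Lemma S_preimage x : injective alpha -> Sset D phi psi (alpha x) ->
  Sset D' (fun x => phi (alpha x)) (fun x => psi (alpha x)) x.
Proof.
move=> inj [C [hC [heq hx]]].
have hC' := hC; move: hC' => [c0 [cl [cp cc]]].
exists (fun y => C (alpha y)); split; last by split => // y hy; exact: heq.
split; first by rewrite (linM0 a_lin).
split; first by move=> a y z hy hz; rewrite a_lin; exact: cl.
split; first by move=> n y hy; rewrite a_pr; exact: cp.
move=> y hy.
have [s [hs1 hs2]] := cc _ hy.
have [r1 [e1 f1 _]] := reduce_snd (hcop D' y).
have hq1 : forall f g, islinF f -> islinF g ->
    tev f g [seq (alpha p.1, alpha p.2) | p <- r1] = tev f g s.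
  move=> f g hf hg; rewrite tev_map e1; try exact: linF_comp a_lin.
  rewrite -tev_map -(a_cop y hf hg); exact: hs2.
have fq1 : free (map snd [seq (alpha p.1, alpha p.2) | p <- r1]).
  have := free_map inj f1; by rewrite -!map_comp.
have C1 := key_sym hD hC hs1 hq1 fq1.
have [r2 [e2 f2 m2]] := reduce_fst r1.
have hq2 : forall f g, islinF f -> islinF g ->
    tev f g [seq (alpha p.1, alpha p.2) | p <- r2] = tev f g s.
  move=> f g hf hg; rewrite -hq1 // !tev_map e2 //; exact: linF_comp a_lin.
have fq2 : free (map fst [seq (alpha p.1, alpha p.2) | p <- r2]).
  have := free_map inj f2; by rewrite -!map_comp.
have C2 := key hD hC hs1 hq2 fq2.
exists r2; split.
  move=> i hi; split.
    have := m2 i hi => /mapP [p hp ->].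
    have := C1 (index p r1); rewrite size_map index_mem => /(_ hp).
    by rewrite (nth_map (0,0)) ?index_mem // nth_index.
  have := C2 i; rewrite size_map (nth_map (0,0)) //=; by apply.
move=> f g hf hg; by rewrite e2 // e1.
Qed.
End Chars.
End Morph.

Unset Implicit Arguments.

Theorem proposition5p6 (k : fieldType) (H' H : algType k)
    (D' : HopfData H') (D : HopfData H) (alpha : H' -> H)
    (phi psi : H -> k) :
  is_gcHopf D' -> is_gcHopf D -> is_hopf_morph D' D alpha ->
  is_character phi -> is_character psi ->
  let phi' := fun x => phi (alpha x) in
  let psi' := fun x => psi (alpha x) in
  (* (a) *)
  (forall x, Sset D' phi' psi' x -> Sset D phi psi (alpha x)) /\
  (* (b) *)
  (forall f : H' -> k, Iset D' phi' psi' f <->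
     ideal_gen D' (fun g => exists h, Iset D phi psi h /\
                                      forall x, g x = h (alpha x)) f) /\
  (* injective case *)
  (injective alpha ->
     (forall x, Sset D' phi' psi' x <-> Sset D phi psi (alpha x)) /\
     (forall f : H' -> k, Iset D' phi' psi' f <->
        exists h, Iset D phi psi h /\ forall x, f x = h (alpha x))).
Proof.
move=> hD' hD ha [hp _] [hq _] phi' psi'.
have hp' : islinF phi' := linF_comp hp (a_lin ha).
have hq' : islinF psi' := linF_comp hq (a_lin ha).
split; first by move=> x; exact: (S_image ha).
split.
  move=> f; split.
    move=> [m [u [g [v [hg hf]]]]]; exists m, u, g, v; split => // i.
    have [hu [[n hn] hv]] := hg i; split => //; split => //.
    exists (fun y => restr D phi n y - restr D psi n y); split.
      exact: gen_ideal.
    move=> x; by rewrite hn /restr /phi' /psi' (a_pr ha).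
  move=> [m [u [g [v [hg hf]]]]].
  apply: (ideal_ext (f := fun x => \sum_(i <- index_enum 'I_m) conv D' (conv D' (u i) (g i)) (v i) x));
    last by move=> x; rewrite hf.
  apply: ideal_sum => i; have [hu [[h [hh hgh]] hv]] := hg i.
  have -> : g i = fun x => h (alpha x) by apply: functional_extensionality.
  apply: (ideal_mul hD') hu hv _.
    move=> g' gg; exact: (Gen_lin hD' hp' hq' gg).
  exact: (pull hD ha hp hq hh).
move=> inj; split.
  move=> x; split; [exact: (S_image ha) | exact: (S_preimage hD ha)].
move=> f; split; last first.
  move=> [h [hh e]]; apply: ideal_ext (pull hD ha hp hq hh) _ => x; by rewrite e.
move=> [m [u [g [v [hg hf]]]]].
have [U hU] := fchoice (fun i => lift hD' hD ha inj (hg i).1).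
have [V hV] := fchoice (fun i => lift hD' hD ha inj (hg i).2.2).
have hEx : forall i : 'I_m, exists t : H -> k,
    (exists n, forall y, t y = restr D phi n y - restr D psi n y) /\
    forall x, t (alpha x) = g i x.
  move=> i; have [n hn] := (hg i).2.1.
  exists (fun y => restr D phi n y - restr D psi n y); split; first by exists n.
  move=> x; by rewrite hn /restr /phi' /psi' (a_pr ha).
have [E hE] := fchoice hEx.
exists (fun y => \sum_(i < m) conv D (conv D (U i) (E i)) (V i) y); split.
  exists m, U, E, V; split => // i; split; first exact: (hU i).1.
  split; [exact: (hE i).1 | exact: (hV i).1].
move=> x; rewrite hf; apply: eq_bigr => i _.
have lU := (hU i).1.1; have lV := (hV i).1.1.
have lE := Gen_lin hD hp hq (hE i).1.
rewrite (conv_alpha ha _ (conv_lin hD lU lE) lV).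
have -> : (fun y => V i (alpha y)) = v i by apply: functional_extensionality => y; exact: (hV i).2.
congr (conv D' _ _ x); apply: functional_extensionality => y.
rewrite (conv_alpha ha _ lU lE); congr (conv D' _ _ y); apply: functional_extensionality => z;
  [exact: esym ((hU i).2 z) | exact: esym ((hE i).2 z)].
Qed.
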